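(* In the setting described in the context, for all sufficiently large $y$ (in terms of $E$, $\gamma$ and $\delta$), there exists a subset of $\mathbf{D}_{\mathbf{P}}$ which can be partitioned into $\frac{2^{\vert\mathbf{P}\vert}}{2M}$ sets of $M$ elements each, each of these sets having logarithmic spread greater than $1$.
   Context: For a finite set $\mathbf{S}$ of positive integers, $\mathbf{D}_{\mathbf{S}}=\{d: d\mid\prod_{s\in\mathbf{S}}s\}$, and the logarithmic spread of $\mathbf{S}$ is $\min_{s_1\neq s_2}\vert\log s_1-\log s_2\vert$ over $s_1,s_2\in\mathbf{S}$. $P^+(n)$ denotes the largest prime factor of $n$. Setting: fix $E>0$ and $\gamma>0$ such that $\#\{p\leq x: P^+(p-1)\leq x^{1-E}\}\geq\frac{\gamma x}{\log x}$ for all sufficiently large $x$. Fix $\delta>0$ and put $\Delta=\delta^2/24$. Fix positive constants $C_5,C_6$ and, for each positive integer $x$, an integer $s_x\in[\sqrt{\log x},e^{\sqrt{\log x}}]$ such that $\sum_{q\leq x^{2/5},\,s_x\nmid q}\max_{2\leq z\leq x}\max_{(a,q)=1}\vert\pi(z;q,a)-\pi(z)/\phi(q)\vert\leq C_5x e^{-C_6\sqrt{\log x}}$ for all $x$. Let $M$ be a fixed power of two depending only on $\delta$ (in the paper, the smallest power of two greater than the integer $N$ supplied, for $m=2$ and this $\Delta$, by the Maynard-type theorem: for any admissible set of $N$ linear forms $d_in+c_i$ with positive integer coefficients and $d_i>c_i$, at least $x/(\log x)^N$ integers $n\in[x,2x)$ make at least $m$ of the forms prime). Let $y$ be a large real parameter,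 $\Upsilon=\lceil e^{y^{2+2\Delta}}\rceil$, $\kappa=\prod_{y/\log y\leq p\leq y,\ P^+(p-1)\leq y^{1-E}}p^2$, and let $p^*$ be the largest prime factor of $s_{2\Upsilon\kappa}$. Finally $\mathbf{P}=\{p\text{ prime}: \frac{y}{\log y}\leq p\leq y,\ P^+(p-1)\leq y^{1-E},\ p\neq p^*\}$. *)

(* Defs.v *)
From HB Require Import structures.
From mathcomp Require Import all_boot all_order all_algebra.
From mathcomp Require Import all_classical all_reals all_analysis.
From mathcomp Require Import Rstruct.
Set Implicit Arguments. Unset Strict Implicit. Unset Printing Implicit Defensive.
Import Order.TTheory GRing.Theory Num.Theory.
Local Open Scope ring_scope.

Notation RR := Rdefinitions.R.

(* P^+(n): largest prime factor of n (max_pdiv n = 1 for n <= 1). *)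
Definition Pplus (n : nat) : nat := max_pdiv n.

Definition count_smooth_shift (E x : RR) : nat :=
  count (fun p => prime p && ((Pplus p.-1)%:R <= x `^ (1 - E)))
        (iota 0 `|Num.floor x|%N.+1).

Definition prime_pi (z : nat) : nat := count prime (iota 0 z.+1).
Definition prime_pi_ap (z q a : nat) : nat :=
  count (fun p => prime p && (p == a %[mod q])) (iota 0 z.+1).

Definition sw_err (x q : nat) : RR :=
  \big[Num.max/0]_(2 <= z < x.+1)
    \big[Num.max/0]_(a < q | coprime a q)
       `| (prime_pi_ap z q a)%:R - (prime_pi z)%:R / (totient q)%:R |.

Definition sw_sum (s : nat -> nat) (x : nat) : RR :=
  \sum_(1 <= q < x.+1 | ((q%:R : RR) <= (x%:R : RR) `^ (2 / 5)) && ~~ (s x %| q)%N) sw_err x q.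

Definition Delta (delta : RR) : RR := delta ^+ 2 / 24.

Definition Upsilon (delta y : RR) : nat :=
  `|Num.ceil (expR (y `^ (2 + 2 * Delta delta)))|%N.

Definition goodp (E y : RR) (p : nat) : bool :=
  [&& prime p, y / ln y <= p%:R, p%:R <= y & (Pplus p.-1)%:R <= y `^ (1 - E)].

Definition kappa (E y : RR) : nat :=
  \prod_(p <- iota 0 `|Num.floor y|%N.+1 | goodp E y p) p ^ 2.

Definition pstar (s : nat -> nat) (E delta y : RR) : nat :=
  Pplus (s (2 * Upsilon delta y * kappa E y)%N).

(* the set P, as a duplicate-free increasing list *)
Definition Pset (s : nat -> nat) (E delta y : RR) : seq nat :=
  [seq p <- iota 0 `|Num.floor y|%N.+1 | goodp E y p & p != pstar s E delta y].

Definition Dset (S : seq nat) : seq nat := divisors (\prod_(p <- S) p).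

Definition log_spread_gt (S : seq nat) (c : RR) : Prop :=
  forall s1 s2, s1 \in S -> s2 \in S -> s1 != s2 ->
    c < `| ln (s1%:R : RR) - ln (s2%:R : RR) |.

(* Main.v *)
Require Import Defs.
From HB Require Import structures.
From mathcomp Require Import all_boot all_order all_algebra.
From mathcomp Require Import all_classical all_reals all_analysis.
From mathcomp Require Import Rstruct.
From mathcomp Require Import ring lra zify.
Import Order.TTheory GRing.Theory Num.Theory.

Lemma cbin_step L : 'C(L.*2.+2, L.+1) * L.+1 = 2 * L.*2.+1 * 'C(L.*2, L).
Proof.
have h1 := mul_bin_diag L.*2.+2 L.
have h2 := mul_bin_down L.*2.+1 L.
rewrite /= in h1 h2.
have e : L.*2.+1 - L = L.+1 by rewrite -addnn; lia.
rewrite e in h2.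
have : L.+1 * ('C(L.*2.+2, L.+1) * L.+1) = L.+1 * (2 * L.*2.+1 * 'C(L.*2, L)).
  have -> : L.+1 * ('C(L.*2.+2, L.+1) * L.+1) = (L.+1 * 'C(L.*2.+2, L.+1)) * L.+1 by rewrite mulnA.
  rewrite -h1 -mulnA (mulnC _ L.+1) -h2 -addnn. lia.
move/eqP; rewrite eqn_mul2l /= => /eqP //.
Qed.

Lemma cbin_bound L : 'C(L.*2, L) ^ 2 * L.*2.+1 <= 16 ^ L.
Proof.
elim: L => [|L IH]; first by rewrite bin0.
have st := cbin_step L.
set a := 'C(L.*2, L) in IH st *. 
have -> : L.+1.*2 = L.*2.+2 by rewrite doubleS.
set b := 'C(L.*2.+2, L.+1) in st *.
rewrite (expnS 16).
suff : (b ^ 2 * L.*2.+3) * L.+1 ^ 2 <= (16 * 16 ^ L) * L.+1 ^ 2.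
  by rewrite leq_pmul2r // expn_gt0.
have -> : b ^ 2 * L.*2.+3 * L.+1 ^ 2 = (b * L.+1) ^ 2 * L.*2.+3 by rewrite expnMn; lia.
rewrite st.
have h : 4 * L.*2.+1 * L.*2.+3 <= 16 * L.+1 ^ 2 by rewrite -addnn; nia.
have := leq_mul (leqnn (4 * L.*2.+1 * L.*2.+3)) IH.
move=> H.
apply: leq_trans (_ : 4 * L.*2.+1 * L.*2.+3 * 16 ^ L <= _).
  move: H; rewrite -addnn; nia.
move: h; nia.
Qed.

Lemma bin_mono_half n c : c.*2 < n -> 'C(n, c) <= 'C(n, c.+1).
Proof.
move=> h.
have e := mul_bin_left n c.
have : c.+1 * 'C(n, c) <= c.+1 * 'C(n, c.+1).
  rewrite e leq_mul2r; apply/orP; right; rewrite -addnn in h; lia.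
by rewrite leq_mul2l.
Qed.

Lemma bin_le_central L c : 'C(L.*2, c) <= 'C(L.*2, L).
Proof.
have key : forall c, c <= L -> 'C(L.*2, c) <= 'C(L.*2, L).
  move=> c0 hc. rewrite -(subKn hc).
  elim: (L - c0) (leq_subr c0 L) => [|d IH] hd; first by rewrite subn0.
  apply: leq_trans _ (IH (ltnW hd)).
  have -> : L - d = (L - d.+1).+1 by lia.
  apply: bin_mono_half. rewrite -addnn; lia.
case: (leqP c L) => hc; first exact: key.
case: (leqP c L.*2) => hc2; last by rewrite bin_small.
rewrite -(bin_sub hc2); apply: key; rewrite -addnn in hc2 *; lia.
Qed.

Lemma bin_small_enough k L c : 4 ^ k.+1 <= L.*2.+1 ->
  'C(L.*2, c) * 2 ^ k.+1 <= 2 ^ L.*2.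
Proof.
move=> hL.
have h1 := cbin_bound L.
have h2 := bin_le_central L c.
rewrite -(@leq_exp2r _ _ 2) // expnMn.
have e1 : (2 ^ k.+1) ^ 2 = 4 ^ k.+1 by rewrite -expnM mulnC expnM.
have e2 : (2 ^ L.*2) ^ 2 = 16 ^ L by rewrite -expnM -muln2 -mulnA mulnC expnM.
rewrite e1 e2.
apply: leq_trans h1.
apply: leq_mul; last exact: hL.
by rewrite leq_exp2r.
Qed.

Lemma card_setT_pow (T : finType) : #|{set T}| = 2 ^ #|T|.
Proof. by have := card_powerset [set: T]; rewrite powersetT !cardsT. Qed.

Lemma bin_le_pow n k : 'C(n, k) <= 2 ^ n.
Proof.
have := card_draws 'I_n k; rewrite card_ord => <-.
by have := card_setT_pow 'I_n; rewrite card_ord => <-; exact: max_card.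
Qed.

Lemma prime_dvd_fact_le p n : prime p -> p %| n`! -> p <= n.
Proof.
move=> pp; elim: n => [|n IH]; first by rewrite fact0 dvdn1 => /eqP e; rewrite e in pp.
rewrite factS Euclid_dvdM // => /orP [h|h].
  by apply: dvdn_leq.
by apply: leq_trans (IH h) _.
Qed.

Lemma prime_dvd_cbin h p : prime p -> h < p <= h.*2 -> p %| 'C(h.*2, h).
Proof.
move=> pp /andP [h1 h2].
have hf := bin_fact (leq_addr h h : h <= h + h).
rewrite -addnn in h2 *.
have hd : p %| (h + h)`! by apply: dvdn_fact; rewrite h2 andbT; lia.
rewrite -hf (_ : h + h - h = h) in hd; last lia.
rewrite !Euclid_dvdM // in hd.
case/orP: hd => // /orP [] /(@prime_dvd_fact_le p h pp); lia.
Qed.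

Lemma prod_primes_dvd h s : uniq s -> all (fun p => h < p <= h.*2) s ->
  \prod_(p <- s | prime p) p %| 'C(h.*2, h).
Proof.
elim: s => [|x s IH]; first by rewrite big_nil dvd1n.
move=> /= /andP [xs us] /andP [hx hs].
rewrite big_cons.
case: ifP => px; last exact: IH.
rewrite Gauss_dvd.
  by rewrite prime_dvd_cbin // IH.
rewrite prime_coprime // Euclid_dvd_prod //.
apply/negP => /=.
elim: s xs {us hs IH} => [|z s IH]; first by rewrite big_nil.
rewrite big_cons inE negb_or => /andP [xz xs].
case: ifP => pz; last exact: IH.
rewrite dvdn_prime2 // (negPf xz) /=; exact: IH.
Qed.

Lemma prod_primes_ge h s : all (fun p => h < p) s ->
  h ^ (count prime s) <= \prod_(p <- s | prime p) p.
Proof.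
elim: s => [|x s IH]; first by rewrite big_nil.
move=> /= /andP [hx hs]; rewrite big_cons.
case: (prime x) => /=; last by rewrite add0n; exact: IH.
rewrite add1n expnS; apply: leq_mul; [exact: ltnW | exact: IH].
Qed.

Lemma cheb_count h : h ^ (count prime (iota h.+1 h)) <= 4 ^ h.
Proof.
apply: leq_trans (prod_primes_ge h (iota h.+1 h) _) _.
  by apply/allP => x; rewrite mem_iota; lia.
apply: leq_trans (_ : 'C(h.*2, h) <= _).
  apply: dvdn_leq; first by rewrite bin_gt0 -addnn leq_addr.
  apply: prod_primes_dvd; first exact: iota_uniq.
  by apply/allP => x; rewrite mem_iota -addnn; lia.
have -> : 4 ^ h = 2 ^ h.*2 by rewrite -muln2 mulnC expnM.
exact: bin_le_pow.
Qed.

Lemma cheb_small r h : 4 ^ r < h -> r * count prime (iota h.+1 h) < h.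
Proof.
move=> hr; set c := count prime _.
rewrite ltnNge; apply/negP => hc.
have h1 := cheb_count h; rewrite -/c in h1.
have h0 : 0 < h by apply: leq_ltn_trans hr.
have : h ^ h <= (4 ^ r) ^ h.
  apply: leq_trans (_ : h ^ (c * r) <= _).
    by rewrite leq_pexp2l // mulnC.
  rewrite expnM -(expnM 4) mulnC (expnM 4). elim: r {hr hc} => // r IH. by rewrite !expnS leq_mul.
rewrite leq_exp2r // => /(leq_trans hr); by rewrite ltnn.
Qed.

Lemma pi_bound r N :
  r * count prime (iota 0 N.+1) <= r * (4 ^ r).*2.+3 + N.*2.
Proof.
elim/ltn_ind: N => N IH.
case: (leqP N (4 ^ r).*2.+2) => hN.
  apply: leq_trans (leq_addr _ _).
  rewrite leq_mul2l; apply/orP; right.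
  apply: leq_trans (count_size _ _) _; rewrite size_iota; lia.
set h := N./2.
have eN : N = h.*2 + odd N by rewrite addnC odd_double_half.
have hr : 4 ^ r < h.
  have : (4 ^ r).*2.+2 < h.*2 + odd N by rewrite -eN.
  case: (odd N) => /=; rewrite -!addnn; lia.
have hrr : r <= 4 ^ r.
  elim: r {IH hN hr h eN} => // r IHr; rewrite expnS; lia.
have hlt : h < N by move: eN hr; rewrite -addnn; lia.
have IHh := IH h hlt.
have hc := @cheb_small r h hr.
have split1 : count prime (iota 0 N.+1) <=
    count prime (iota 0 h.+1) + count prime (iota h.+1 h) + odd N.
  have -> : N.+1 = (h.+1 + h) + odd N by rewrite {1}eN -addnn; lia.
  rewrite !iotaD !count_cat add0n.
  rewrite leq_add2l; apply: leq_trans (count_size _ _) _; by rewrite size_iota.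
have e2 : odd N <= 1 by case: (odd N).
have : r * count prime (iota 0 N.+1) <=
   r * count prime (iota 0 h.+1) + r * count prime (iota h.+1 h) + r * odd N.
  by rewrite -!mulnDr leq_mul2l split1 orbT.
have : r * odd N <= r by rewrite -{2}(muln1 r) leq_mul2l e2 orbT.
move: IHh hc hrr hr eN; rewrite -!addnn.
lia.
Qed.

Lemma count_enum_card (T : finType) (a : pred T) :
  count a (enum T) = #|[set x | a x]|.
Proof.
rewrite -size_filter.
have u : uniq (seq.filter a (enum T)) by rewrite filter_uniq // enum_uniq.
rewrite -(card_uniqP u).
apply: eq_card => x; by rewrite mem_filter mem_enum inE andbT.
Qed.

Section Sorted.
Variable m : nat.
Definition leC (A B : {set 'I_m}) := #|A| <= #|B|.
Definition sseq := sort leC (enum {set 'I_m}).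

Lemma sseq_size : size sseq = 2 ^ m.
Proof.
rewrite size_sort -cardT.
by have := card_powerset [set: 'I_m]; rewrite powersetT !cardsT card_ord.
Qed.

Lemma sseq_uniq : uniq sseq.
Proof. by rewrite sort_uniq enum_uniq. Qed.

Lemma sseq_sorted : sorted leC sseq.
Proof. apply: sort_sorted => A B; exact: leq_total. Qed.

Lemma sseq_count c : count (fun A : {set 'I_m} => #|A| == c) sseq = 'C(m, c).
Proof.
rewrite ((permP (permEl (perm_sort _ _))) (fun A : {set 'I_m} => #|A| == c)) count_enum_card.
by have := card_draws 'I_m c; rewrite card_ord.
Qed.

Lemma sseq_mono p q : p <= q < size sseq ->
  #|nth finset.set0 sseq p| <= #|nth finset.set0 sseq q|.
Proof.
move=> /andP [hpq hq].
apply: (sorted_leq_nth (leT := leC)) => //.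
- move=> B A C; exact: leq_trans.
- move=> A; exact: leqnn.
- exact: sseq_sorted.
- rewrite inE; exact: leq_ltn_trans hq.
Qed.

Lemma sseq_gap p q : p < q < size sseq ->
  #|nth finset.set0 sseq p| = #|nth finset.set0 sseq q| -> q - p < 'C(m, #|nth finset.set0 sseq p|).
Proof.
move=> /andP [hpq hq] he.
set c := #|nth finset.set0 sseq p|.
rewrite -sseq_count.
set a := (fun A : {set 'I_m} => #|A| == c).
rewrite -(cat_take_drop p sseq) count_cat.
apply: leq_trans (leq_addl _ _).
rewrite -(cat_take_drop (q - p).+1 (drop p sseq)) count_cat.
apply: leq_trans (leq_addr _ _).
have hs : size (take (q - p).+1 (drop p sseq)) = (q - p).+1.
  rewrite size_take size_drop; case: ifP => //; lia.
have : all a (take (q - p).+1 (drop p sseq)).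
  apply/(all_nthP finset.set0) => i; rewrite hs => hi.
  rewrite nth_take // nth_drop /a; apply/eqP/anti_leq.
  apply/andP; split; last by apply: sseq_mono; rewrite leq_addr /=; lia.
  rewrite /c he; apply: sseq_mono; apply/andP; split; [lia | done].
by rewrite all_count hs => /eqP ->.
Qed.
End Sorted.

Section Groups.
Variables (m k : nat).
Hypothesis hkm : k < m.
Let G := 2 ^ (m - k.+1).
Let M := 2 ^ k.
Hypothesis hG : forall c, 'C(m, c) <= G.

Definition Sgrp (g j : nat) := nth finset.set0 (sseq m) (g + j * G).

Lemma GM_eq : G * M = 2 ^ m.-1.
Proof. rewrite /G /M -expnD; congr (_ ^ _); lia. Qed.

Lemma idx_lt g j : g < G -> j < M -> g + j * G < size (sseq m).
Proof.
move=> hg hj; rewrite sseq_size.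
have h1 : g + j * G < j.+1 * G by rewrite mulSn ltn_add2r.
apply: leq_trans h1 _.
apply: leq_trans (_ : M * G <= _); first by rewrite leq_mul2r hj orbT.
rewrite mulnC GM_eq leq_exp2l //; lia.
Qed.

Lemma Sgrp_card_neq g j j' : g < G -> j < M -> j' < M -> j != j' ->
  #|Sgrp g j| != #|Sgrp g j'|.
Proof.
move=> hg hj hj' hne.
wlog hlt : j j' hj hj' hne / j < j'.
  move=> W; case: (ltngtP j j') => h.
  - exact: W.
  - rewrite eq_sym; apply: W => //; by rewrite eq_sym.
  - by rewrite h eqxx in hne.
apply/eqP => he.
have hq := idx_lt g j' hg hj'.
have hpq : g + j * G < g + j' * G by rewrite ltn_add2l ltn_mul2r hlt andbT expn_gt0.
have := @sseq_gap m (g + j * G) (g + j' * G).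
rewrite hpq hq => /(_ isT he) hgap.
have := leq_trans hgap (hG _).
have : j.+1 * G <= j' * G by rewrite leq_mul2r hlt orbT.
rewrite mulSn; lia.
Qed.

Lemma Sgrp_inj g j g' j' : g < G -> j < M -> g' < G -> j' < M ->
  Sgrp g j = Sgrp g' j' -> g = g' /\ j = j'.
Proof.
move=> hg hj hg' hj' /eqP.
rewrite /Sgrp nth_uniq ?idx_lt ?sseq_uniq // => /eqP e.
have G0 : 0 < G by rewrite expn_gt0.
have e1 : (g + j * G) %% G = (g' + j' * G) %% G by rewrite e.
rewrite !(addnC _ (_ * G)) !modnMDl !modn_small // in e1.
subst g'. split => //.
move/eqP: e; rewrite eqn_add2l eqn_mul2r => /orP [|/eqP] //.
by rewrite eqn0Ngt G0.
Qed.
End Groups.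

Lemma dvd_prod_mem (I : finType) (S : {set I}) (F : I -> nat) q :
  prime q -> q %| \prod_(x in S) F x -> exists2 x, x \in S & q %| F x.
Proof.
move=> pq; rewrite Euclid_dvd_prod // big_has_cond => /hasP [x _ /andP [h1 h2]].
by exists x.
Qed.

Lemma mem_dvd_prod (I : finType) (S : {set I}) (F : I -> nat) x :
  x \in S -> F x %| \prod_(x in S) F x.
Proof. by move=> hx; rewrite (bigD1 x) //= dvdn_mulr. Qed.

Lemma subprod_dvd (I : finType) (S : {set I}) (F : I -> nat) :
  \prod_(x in S) F x %| \prod_x F x.
Proof. rewrite [X in _ %| X](bigID (mem S)) /=; apply: dvdn_mulr; by rewrite (eq_bigl (fun x => x \in S)). Qed.

Section Inj.
Variables (a b : nat) (F : 'I_a -> nat) (H : 'I_b -> nat).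
Hypotheses (pF : forall x, prime (F x)) (pH : forall x, prime (H x)).
Hypotheses (iF : injective F) (iH : injective H) (dFH : forall x y, F x != H y).

Lemma prod_sub1 (S S' : {set 'I_a}) (T T' : {set 'I_b}) :
  \prod_(x in S) F x * \prod_(x in T) H x = \prod_(x in S') F x * \prod_(x in T') H x ->
  S \subset S'.
Proof.
move=> e; apply/fintype.subsetP => x hx.
have : F x %| \prod_(x in S') F x * \prod_(x in T') H x.
  by rewrite -e dvdn_mulr // mem_dvd_prod.
rewrite Euclid_dvdM // => /orP [] /(@dvd_prod_mem _ _ _ _ (pF x)) [z hz].
  by rewrite dvdn_prime2 // => /eqP /iF ->.
by rewrite dvdn_prime2 // (negPf (dFH _ _)).
Qed.

Lemma prod_sub2 (S S' : {set 'I_a}) (T T' : {set 'I_b}) :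
  \prod_(x in S) F x * \prod_(x in T) H x = \prod_(x in S') F x * \prod_(x in T') H x ->
  T \subset T'.
Proof.
move=> e; apply/fintype.subsetP => x hx.
have : H x %| \prod_(x in S') F x * \prod_(x in T') H x.
  by rewrite -e dvdn_mull // mem_dvd_prod.
rewrite Euclid_dvdM // => /orP [] /(@dvd_prod_mem _ _ _ _ (pH x)) [z hz].
  by rewrite dvdn_prime2 // eq_sym (negPf (dFH _ _)).
by rewrite dvdn_prime2 // => /eqP /iH ->.
Qed.

Lemma prod_inj2 (S S' : {set 'I_a}) (T T' : {set 'I_b}) :
  \prod_(x in S) F x * \prod_(x in T) H x = \prod_(x in S') F x * \prod_(x in T') H x ->
  S = S' /\ T = T'.
Proof.
move=> e; split; apply/eqP; rewrite finset.eqEsubset.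
  by rewrite (@prod_sub1 _ _ _ _ e) (@prod_sub1 _ _ _ _ (esym e)).
by rewrite (@prod_sub2 _ _ _ _ e) (@prod_sub2 _ _ _ _ (esym e)).
Qed.
End Inj.

Lemma construct (P : seq nat) (k m : nat) :
  uniq P -> all prime P -> m <= size P -> k < m ->
  (forall c, 'C(m, c) <= 2 ^ (m - k.+1)) ->
  exists f : 'I_(2 ^ size P %/ (2 * 2 ^ k)) -> 'I_(2 ^ k) -> nat,
    (forall i j i' j', f i j = f i' j' -> i = i' /\ j = j') /\
    (forall i j, f i j %| \prod_(p <- P) p) /\
    (forall i j j', j != j' -> exists S S' : {set 'I_m}, exists X,
        [/\ #|S| != #|S'|, 0 < X,
         f i j = \prod_(a in S) nth 0 P a * X &
         f i j' = \prod_(a in S') nth 0 P a * X]).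
Proof.
move=> uP pP hmn hkm hG.
set n := size P.
set r := n - m.
set G := 2 ^ (m - k.+1).
have G0 : 0 < G by rewrite expn_gt0.
pose F (a : 'I_m) := nth 0 P a.
pose H (b : 'I_r) := nth 0 P (b + m).
have hK : 2 ^ n %/ (2 * 2 ^ k) = 2 ^ r * G.
  rewrite -expnS /G -expnD.
  have -> : n = (r + (m - k.+1)) + k.+1 by rewrite /r /n; lia.
  by rewrite expnD mulnK // expn_gt0.
pose Tseq := enum {set 'I_r}.
have hTs : size Tseq = 2 ^ r.
  rewrite /Tseq -cardT.
  by have := card_powerset [set: 'I_r]; rewrite powersetT !cardsT card_ord.
have pF : forall x, prime (F x).
  move=> x; apply: (allP pP); apply: mem_nth; exact: leq_trans (ltn_ord x) hmn.
have hrl : forall x : 'I_r, x + m < size P by move=> x; rewrite addnC -ltn_subRL.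
have pH : forall x, prime (H x).
  move=> x; apply: (allP pP); apply: mem_nth; exact: hrl.
have iF : injective F.
  move=> x y /eqP; rewrite /F nth_uniq //; last 2 first.
  - exact: leq_trans (ltn_ord x) hmn.
  - exact: leq_trans (ltn_ord y) hmn.
  by move/eqP/ord_inj.
have iH : injective H.
  move=> x y /eqP; rewrite /H nth_uniq ?hrl //.
  by rewrite eqn_add2r => /eqP/ord_inj.
have dFH : forall x y, F x != H y.
  move=> x y; rewrite /F /H nth_uniq ?hrl //.
  - by apply/negP => /eqP hxy; have := ltn_ord x; rewrite hxy ltnNge leq_addl.
  - exact: leq_trans (ltn_ord x) hmn.
have hidx : forall i : 'I_(2 ^ n %/ (2 * 2 ^ k)), i %/ G < 2 ^ r /\ i %% G < G.
  move=> i; split; last by rewrite ltn_pmod.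
  by rewrite ltn_divLR // -hK.
pose f (i : 'I_(2 ^ n %/ (2 * 2 ^ k))) (j : 'I_(2 ^ k)) :=
  \prod_(a in Sgrp m k (i %% G) j) F a * \prod_(b in nth finset.set0 Tseq (i %/ G)) H b.
exists f; split; [|split].
- move=> i j i' j' e.
  have [e1 e2] := @prod_inj2 _ _ _ _ pF pH iF iH dFH _ _ _ _ e.
  have [t1 g1] := hidx i.
  have [t2 g2] := hidx i'.
  have [eg ej] := @Sgrp_inj m k hkm _ _ _ _ g1 (ltn_ord j) g2 (ltn_ord j') e1.
  have et : i %/ G = i' %/ G.
    apply/eqP; move/eqP: e2; rewrite nth_uniq // ?hTs //.
    by rewrite /Tseq enum_uniq.
  split; apply: ord_inj => //.
  by rewrite (divn_eq i G) (divn_eq i' G) et eg.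
- move=> i j.
  have -> : \prod_(p <- P) p = \prod_a F a * \prod_b H b.
    rewrite (big_nth 0) -/n (big_cat_nat (leq0n m) hmn) /= big_mkord.
    congr (_ * _).
    by rewrite -{1}[m]add0n big_addn big_mkord.
  apply: dvdn_mul; exact: subprod_dvd.
- move=> i j j' hjj.
  have [t1 g1] := hidx i.
  exists (Sgrp m k (i %% G) j), (Sgrp m k (i %% G) j'),
    (\prod_(b in nth finset.set0 Tseq (i %/ G)) H b).
  split => //.
  + apply: Sgrp_card_neq => //.
  + apply: prodn_gt0 => b; exact: prime_gt0.
Qed.

Local Open Scope ring_scope.

Lemma sum_bounds (m : nat) (u : 'I_m -> RR) lo hi (A : {set 'I_m}) :
  (forall a, lo <= u a <= hi) ->
  lo * #|A|%:R <= \sum_(a in A) u a <= hi * #|A|%:R.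
Proof.
move=> hb; apply/andP; split.
  by rewrite mulr_natr -sumr_const; apply: ler_sum => a _; case/andP: (hb a).
by rewrite mulr_natr -sumr_const; apply: ler_sum => a _; case/andP: (hb a).
Qed.

Lemma spread_aux (m : nat) (u : 'I_m -> RR) lo hi (S S' : {set 'I_m}) :
  (forall a, lo <= u a <= hi) -> lo <= hi ->
  1 < lo - m%:R * (hi - lo) -> (#|S' :\: S| < #|S :\: S'|)%N ->
  1 < \sum_(a in S) u a - \sum_(a in S') u a.
Proof.
move=> hb hlh hsp hab.
rewrite (big_setID S') [X in _ - X](big_setID S) /= finset.setIC.
set X := \sum_(i in S' :&: S) u i.
set A1 := \sum_(i in S :\: S') u i.
set A2 := \sum_(i in S' :\: S) u i.
have e : X + A1 - (X + A2) = A1 - A2 by lra.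
rewrite e.
have [h1 _] := andP (@sum_bounds m u lo hi (S :\: S') hb).
have [_ h2] := andP (@sum_bounds m u lo hi (S' :\: S) hb).
set a := #|S :\: S'| in hab h1.
set b := #|S' :\: S| in hab h2.
have ham : (a <= m)%N by rewrite /a; have := max_card (S :\: S'); rewrite card_ord.
have hab' : (b.+1 <= a)%N := hab.
have ra : (b%:R + 1 <= a%:R :> RR) by rewrite natr1 ler_nat.
have rm : (a%:R <= m%:R :> RR) by rewrite ler_nat.
have lo0 : 0 <= lo.
  have : 0 <= m%:R * (hi - lo) :> RR by apply: mulr_ge0 => //; lra.
  lra.
have : 0 <= (a%:R - b%:R - 1) * lo by apply: mulr_ge0 => //; lra.
have : 0 <= (m%:R - b%:R) * (hi - lo) by apply: mulr_ge0; lra.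
move=> H1 H2. move: h1 h2; rewrite -/A1 -/A2 => h1 h2. nra.
Qed.

Lemma spread (m : nat) (u : 'I_m -> RR) lo hi (S S' : {set 'I_m}) :
  (forall a, lo <= u a <= hi) -> lo <= hi ->
  1 < lo - m%:R * (hi - lo) -> #|S| != #|S'| ->
  1 < `| \sum_(a in S) u a - \sum_(a in S') u a |.
Proof.
move=> hb hlh hsp hne.
have e1 := cardsID S' S.
have e2 := cardsID S S'.
rewrite finset.setIC in e2.
case: (ltngtP #|S' :\: S| #|S :\: S'|) => h.
- have := @spread_aux m u lo hi S S' hb hlh hsp h.
  move=> H; apply: lt_le_trans H _; exact: ler_norm.
- have := @spread_aux m u lo hi S' S hb hlh hsp h.
  move=> H; apply: lt_le_trans H _; rewrite -normrN opprB; exact: ler_norm.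
- exfalso; move: hne; rewrite -e1 -e2 h; by rewrite eqxx.
Qed.

Lemma floor_nat (x : RR) (p : nat) : 0 <= x ->
  (p <= `|Num.floor x|%N)%N = (p%:R <= x).
Proof.
move=> x0.
have f0 : (0 <= Num.floor x)%R by rewrite floor_ge0.
rewrite -(floor_ge_int x p) -lez_nat.
by rewrite gez0_abs.
Qed.

Lemma count3 (T : eqType) (s : seq T) (a b c d : pred T) :
  (forall x, x \in s -> a x -> [|| b x, c x | d x]) ->
  (count a s <= count b s + count c s + count d s)%N.
Proof.
elim: s => //= x s IH H.
have IH' := IH (fun z hz => H z (@mem_behead _ (x :: s) z hz)).
have Hx := H x (mem_head x s).
case: (a x) Hx => [/(_ isT)|_]; last by lia.
case: (b x); case: (c x); case: (d x) => //= _; lia.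
Qed.

Lemma mem_P s E delta y p : p \in Pset s E delta y ->
  [/\ prime p, y / ln y <= p%:R & p%:R <= y].
Proof.
rewrite mem_filter => /andP [/andP [g _] _]; move: g.
by rewrite /goodp => /and4P [].
Qed.

Lemma cs_bound s E delta y : 0 <= y -> 0 < ln y ->
  (count_smooth_shift E y <= size (Pset s E delta y) + 1 +
     prime_pi `|Num.floor (y / ln y)|%N)%N.
Proof.
move=> y0 ly0.
rewrite /count_smooth_shift /Pset size_filter.
set I := iota 0 _.
set ps := pstar s E delta y.
set Z := `|Num.floor (y / ln y)|%N.
have z0 : 0 <= y / ln y by apply: divr_ge0 => //; exact: ltW.
apply: leq_trans (@count3 _ I _ (fun p => goodp E y p && (p != ps)) (pred1 ps)
   (fun p => prime p && (p <= Z)%N) _) _.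
  move=> x; rewrite mem_iota add0n ltnS floor_nat // => /andP [_ hx] /andP [px hPx].
  case: (leP (y / ln y) x%:R) => hz.
    have g : goodp E y x by rewrite /goodp px hz hx hPx.
    by rewrite g /=; case: (x =P ps) => [->|]; rewrite ?eqxx ?orbT //; move/eqP => ->.
  by rewrite px /= floor_nat // (ltW hz) !orbT.
apply: leq_add; first apply: leq_add => //.
  by have := count_uniq_mem ps (iota_uniq 0 `|Num.floor y|%N.+1); rewrite /I => ->; case: (_ \in _).
rewrite -!size_filter /prime_pi -size_filter.
apply: uniq_leq_size; first by rewrite filter_uniq // iota_uniq.
move=> x; rewrite !mem_filter !mem_iota /= => /andP [/andP [-> h] _] /=.
by rewrite add0n ltnS h.
Qed.

Lemma ln_lin (v K : RR) : 0 < v -> 0 < K -> ln v < v / K + ln K.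
Proof.
move=> v0 K0.
have e : ln v = ln (v / K) + ln K.
  by rewrite -lnM ?posrE ?divr_gt0 // divfK // gt_eqF.
rewrite e ltrD2r; apply: ln_sublinear; exact: divr_gt0.
Qed.

Lemma lnln (y : RR) (m : nat) :
  2 + 2 * m.+1%:R * ln (2 * m.+1%:R) < ln y -> 1 < ln y - m.+1%:R * ln (ln y).
Proof.
move=> h.
have m0 : 0 < m.+1%:R :> RR by rewrite ltr0n.
have K0 : 1 <= 2 * m.+1%:R :> RR.
  have : 1 <= m.+1%:R :> RR by rewrite ler1n.
  lra.
have lK : 0 <= ln (2 * m.+1%:R : RR) by apply: ln_ge0.
have hm : 0 <= m.+1%:R * ln (2 * m.+1%:R : RR) by apply: mulr_ge0 => //; exact: ltW.
have v0 : 0 < ln y by lra.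
have hl := @ln_lin (ln y) (2 * m.+1%:R) v0 (lt_le_trans ltr01 K0).
move: hl; rewrite -(ltr_pM2l m0) mulrDr.
have -> : m.+1%:R * (ln y / (2 * m.+1%:R)) = ln y / 2 :> RR.
  by field; rewrite gt_eqF.
lra.
Qed.

Lemma z_big (y Z0 : RR) : 0 < Z0 -> 1 < y -> 2 * Z0 * ln (2 * Z0) <= y ->
  Z0 <= y / ln y.
Proof.
move=> z0 y1 h.
have ly : 0 < ln y by apply: ln_gt0.
have hl := @ln_lin y (2 * Z0) (lt_trans ltr01 y1).
rewrite ler_pdivlMr //.
move: (hl ltac:(lra)); rewrite -(ltr_pM2l z0) mulrDr.
have -> : Z0 * (y / (2 * Z0)) = y / 2.
  by field; rewrite gt_eqF.
lra.
Qed.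

Lemma ln_prod (I : finType) (S : {set I}) (F : I -> nat) :
  (forall i, 0 < F i)%N ->
  ln ((\prod_(i in S) F i)%:R : RR) = \sum_(i in S) ln (F i)%:R.
Proof.
move=> hF; rewrite natr_prod.
suff : 0 < \prod_(i in S) (F i)%:R :> RR /\ ln (\prod_(i in S) (F i)%:R : RR) = \sum_(i in S) ln (F i)%:R by case.
apply: (big_rec2 (fun x z => 0 < x /\ ln x = z)) => [|i x z _ [x0 e]]; first by rewrite ln1.
split; first by rewrite mulr_gt0 // ltr0n.
by rewrite lnM ?posrE ?ltr0n // e.
Qed.

Lemma prod_pos (s : seq nat) : all prime s -> (0 < \prod_(p <- s) p)%N.
Proof.
elim: s => [|x s IH]; first by rewrite big_nil.
by move=> /= /andP [px ps]; rewrite big_cons muln_gt0 prime_gt0 // IH.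
Qed.

Theorem lemma2 (E gamma : RR) (hE : 0 < E) (hgamma : 0 < gamma)
  (hsmooth : exists X0 : RR, forall x : RR, X0 <= x ->
      gamma * x / ln x <= (count_smooth_shift E x)%:R)
  (delta : RR) (hdelta : 0 < delta) (k : nat) :
  let M := (2 ^ k)%N in
  exists y0 : RR,
  forall (C5 C6 : RR) (s : nat -> nat),
    0 < C5 -> 0 < C6 ->
    (forall x : nat, (0 < x)%N ->
       Num.sqrt (ln (x%:R : RR)) <= (s x)%:R <= expR (Num.sqrt (ln (x%:R : RR)))) ->
    (forall x : nat, (0 < x)%N ->
       sw_sum s x <= C5 * x%:R * expR (- (C6 * Num.sqrt (ln (x%:R : RR))))) ->
  forall y : RR, y0 <= y ->
    let P := Pset s E delta y in
    let K := (2 ^ size P %/ (2 * M))%N in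
    (2 * M %| 2 ^ size P)%N /\
    exists f : 'I_K -> 'I_M -> nat,
      (forall i j i' j', f i j = f i' j' -> i = i' /\ j = j') /\
      (forall i j, f i j \in Dset P) /\
      (forall i, log_spread_gt [seq f i j | j <- enum 'I_M] 1).
Proof.
move=> M.
have [X0 hX0] := hsmooth.
pose L := (4 ^ k.+1)%N.
pose m := L.*2.
have hkm : (k < m)%N.
  have : (k.+1 < 4 ^ k.+1)%N by apply: ltn_expl.
  rewrite /m /L -addnn; lia.
have hG : forall c, ('C(m, c) <= 2 ^ (m - k.+1))%N.
  move=> c.
  have h := @bin_small_enough k L c ltac:(rewrite /L -addnn; lia).
  have e : (2 ^ m = 2 ^ (m - k.+1) * 2 ^ k.+1)%N by rewrite -expnD subnK.
  by move: h; rewrite -/m e leq_pmul2r // expn_gt0.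
pose r := Num.bound (8 / gamma).
have hr : 8 / gamma < r%:R by apply: archi_boundP; apply: divr_ge0 => //; exact: ltW.
pose B := ((4 ^ r).*2.+3)%N.
have hpiB : forall N, (r * count prime (iota 0 N.+1) <= r * B + N.*2)%N.
  move=> N; exact: pi_bound.
clearbody B r m L.
pose Z0 : RR := 2 * (m + 1 + B)%:R / gamma + 1.
pose V0 : RR := 2 + 2 * m.+1%:R * ln (2 * m.+1%:R).
exists (`|X0| + expR V0 + `|2 * Z0 * ln (2 * Z0)| + 1).
move=> C5 C6 s _ _ _ _ y hy P K.
have hX0y : X0 <= y.
  have := ler_norm X0; have := expR_ge0 V0; have := normr_ge0 (2 * Z0 * ln (2 * Z0)).
  lra.
have hVy : expR V0 < y.
  have := normr_ge0 X0; have := normr_ge0 (2 * Z0 * ln (2 * Z0)); lra.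
have hZy : 2 * Z0 * ln (2 * Z0) <= y.
  have := ler_norm (2 * Z0 * ln (2 * Z0)); have := expR_ge0 V0; have := normr_ge0 X0.
  lra.
have y0 : 0 < y by apply: lt_trans hVy; exact: expR_gt0.
have hlny : V0 < ln y by rewrite -(expRK V0) ltr_ln // posrE expR_gt0.
have hV0 : 2 <= V0.
  have : 0 <= 2 * m.+1%:R * ln (2 * m.+1%:R : RR).
    apply: mulr_ge0; first by rewrite mulr_ge0 // ler0n.
    apply: ln_ge0; have : 1 <= m.+1%:R :> RR by rewrite ler1n.
    lra.
  rewrite /V0; lra.
have ly1 : 1 < ln y by lra.
have y1 : 1 < y.
  have := ln_sublinear y0; lra.
have Z0pos : 0 < Z0.
  rewrite /Z0; have : 0 <= 2 * (m + 1 + B)%:R / gamma.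
    by apply: divr_ge0; [rewrite mulr_ge0 // ler0n | exact: ltW].
  lra.
have hz : Z0 <= y / ln y by apply: z_big.
have hsp : 1 < ln (y / ln y) - m%:R * (ln y - ln (y / ln y)).
  have h := @lnln y m hlny.
  rewrite ln_div ?posrE //; last by lra.
  have : m.+1%:R = m%:R + 1 :> RR by rewrite -natr1.
  move=> e; rewrite e in h; lra.
have hcs := hX0 y hX0y.
have hcb := @cs_bound s E delta y (ltW y0) (lt_trans ltr01 ly1).
rewrite -/P in hcb.
set n := size P in hcb *.
set Z := `|Num.floor (y / ln y)|%N in hcb.
set cs := count_smooth_shift E y in hcs hcb.
have hpi := hpiB Z.
rewrite -/(prime_pi Z) in hpi.
set q := prime_pi Z in hcb hpi.
have hZz : Z%:R <= y / ln y.
  by rewrite -floor_nat ?leqnn //; apply: divr_ge0; lra.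
set z := y / ln y in hz hsp hZz *.
have r0 : 0 < r%:R :> RR.
  by apply: le_lt_trans hr; apply: divr_ge0 => //; exact: ltW.
have A1 : gamma * z <= cs%:R by rewrite /z mulrA.
have A3 : cs%:R <= n%:R + 1 + q%:R :> RR.
  rewrite natr1 -natrD ler_nat -addn1; exact: hcb.
have A4 : 8 <= r%:R * gamma.
  by move: hr; rewrite ltr_pdivrMr // => /ltW.
have A5 : r%:R * q%:R <= r%:R * B%:R + 2 * z :> RR.
  have : r%:R * q%:R <= r%:R * B%:R + 2 * Z%:R :> RR.
    move: hpi; rewrite -(ler_nat RR) natrD !natrM -addnn natrD; lra.
  lra.
have A6 : gamma * Z0 = 2 * (m%:R + 1 + B%:R) + gamma.
  by rewrite /Z0 !natrD; field; rewrite gt_eqF.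
have hn : (m <= n)%N.
  have z0 : 0 <= z by lra.
  have B1 : r%:R * (gamma * z) <= r%:R * (n%:R + 1 + q%:R) :> RR.
    by apply: ler_wpM2l; [exact: ltW | lra].
  have B2 : 8 * z <= r%:R * gamma * z by apply: ler_wpM2r.
  have B3 : gamma * Z0 <= gamma * z by apply: ler_wpM2l => //; exact: ltW.
  have D0 : 0 <= r%:R * ((n%:R + 1 + B%:R) - 3 / 4 * (gamma * z)).
    rewrite mulrBr mulrA (mulrC _ (3/4)) -mulrA. 
    have e1 : r%:R * (n%:R + 1 + q%:R) = r%:R * (n%:R + 1) + r%:R * q%:R :> RR by ring.
    have e2 : r%:R * (n%:R + 1 + B%:R) = r%:R * (n%:R + 1) + r%:R * B%:R :> RR by ring.
    have e3 : r%:R * gamma * z = r%:R * (gamma * z) by ring.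
    lra.
  have D1 : 0 <= (n%:R + 1 + B%:R) - 3 / 4 * (gamma * z) :> RR.
    by move: D0; rewrite pmulr_rge0.
  have m0 : (0 : RR) <= m%:R by rewrite ler0n.
  have b0 : (0 : RR) <= B%:R by rewrite ler0n.
  have : (m%:R : RR) < n%:R + 1 by lra.
  by rewrite natr1 ltr_nat ltnS.
have uP : uniq P by rewrite filter_uniq // iota_uniq.
have pP : all prime P by apply/allP => p /mem_P [].
have [f [finj [fdvd fsp]]] := @construct P k m uP pP hn hkm hG.
have hF : forall a : 'I_m, (0 < nth 0 P a)%N.
  move=> a; apply: prime_gt0; apply: (allP pP); apply: mem_nth.
  exact: leq_trans (ltn_ord a) hn.
split.
  rewrite /M -expnS dvdn_exp2l //; apply: leq_trans hn; exact: hkm.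
exists f; split => //; split.
  by move=> i j; rewrite /Dset -dvdn_divisors ?prod_pos.
move=> i s1 s2 /mapP [j1 _ ->] /mapP [j2 _ ->] hne.
have hj : j1 != j2 by apply: contraNneq hne => ->.
have [S [S' [X [hc hX e1 e2]]]] := fsp i j1 j2 hj.
rewrite e1 e2 !natrM !lnM ?posrE ?ltr0n ?prodn_gt0 //.
rewrite !ln_prod //.
have -> : forall a b c : RR, a + c - (b + c) = a - b by move=> a b c; ring.
have lz : ln z = ln y - ln (ln y) by rewrite /z ln_div ?posrE //; lra.
have lly : 0 <= ln (ln y) by apply: ln_ge0; lra.
apply: (@spread m (fun a => ln (nth 0 P a)%:R) (ln z) (ln y)) => //; last by lra.
move=> a.
have hp : nth 0 P a \in P by apply: mem_nth; exact: leq_trans (ltn_ord a) hn.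
have [_ h1 h2] := @mem_P s E delta y _ hp.
have p0 : 0 < (nth 0 P a)%:R :> RR by rewrite ltr0n.
by rewrite !ler_ln ?posrE // ?h1 ?h2 //; lra.
Qed.
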